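(* Let $J$ be a finite set and $F:\{0,1\}^J\to\mathbb{Q}_{\ge0}$. Then $F$ is windable if and only if $F_\oplus$ is even-windable.
   Context: For $x,y\in\{0,1\}^I$, $x\oplus y$ is coordinatewise addition mod 2, and $\mathbf S$ is the characteristic vector of $S\subseteq I$. $1+J$ denotes the disjoint union of $\{1\}$ and $J$, with elements of $\{0,1\}^{1+J}$ written $(p;x)$, $p\in\{0,1\}$, $x\in\{0,1\}^J$. Define $F_\oplus:\{0,1\}^{1+J}\to\mathbb{Q}_{\ge0}$ by $F_\oplus(p;x)=F(x)$ if $p+\sum_{i\in J}x_i$ is even and $0$ otherwise. For $z\in\{0,1\}^I$, $\mathrm{Match}(z)$ is the set of partitions of $\{i:z_i=1\}$ into pairs, and $\mathrm{Match}'(z)$ the set of partitions of $\{i:z_i=1\}$ into blocks of size 1 or 2. $G:\{0,1\}^I\to\mathbb{Q}_{\ge0}$ is even-windable if there exist $B(x,y,M)\ge0$ for all $x,y\in\{0,1\}^I$, $M\in\mathrm{Match}(x\oplus y)$, with $G(x)G(y)=\sum_{M\in\mathrm{Match}(x\oplus y)}B(x,y,M)$ for all $x,y$, and $B(x,y,M)=B(x\oplus\mathbf S,y\oplus\mathbf S,M)$ for all $x,y$ and all $S\in M\in\mathrm{Match}(x\oplus y)$. $G$ is windable if the same holds with $\mathrm{Match}$ replaced everywhere by $\mathrm{Match}'$. *)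

(* Defs.v *)
From HB Require Import structures.
From mathcomp Require Import all_boot all_order all_algebra.
Set Implicit Arguments. Unset Strict Implicit. Unset Printing Implicit Defensive.
Import Order.TTheory GRing.Theory Num.Theory.
Local Open Scope ring_scope.

Definition bvec (I : finType) := {ffun I -> bool}.

Definition bxor (I : finType) (x y : bvec I) : bvec I := [ffun i => x i (+) y i].

Definition charv (I : finType) (S : {set I}) : bvec I := [ffun i => i \in S].

Definition supp (I : finType) (z : bvec I) : {set I} := [set i | z i].

Definition is_match (I : finType) (z : bvec I) (M : {set {set I}}) : bool :=
  partition M (supp z) && [forall S in M, #|S| == 2%N].

Definition is_match' (I : finType) (z : bvec I) (M : {set {set I}}) : bool :=
  partition M (supp z) && [forall S in M, (#|S| == 1%N) || (#|S| == 2%N)].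

Definition windable_wrt (I : finType)
    (mt : bvec I -> {set {set I}} -> bool) (G : bvec I -> rat) : Prop :=
  exists B : bvec I -> bvec I -> {set {set I}} -> rat,
    (forall x y M, mt (bxor x y) M -> 0 <= B x y M) /\
    (forall x y, G x * G y = \sum_(M : {set {set I}} | mt (bxor x y) M) B x y M) /\
    (forall x y M S, mt (bxor x y) M -> S \in M ->
        B x y M = B (bxor x (charv S)) (bxor y (charv S)) M).

Definition even_windable (I : finType) (G : bvec I -> rat) : Prop :=
  windable_wrt (@is_match I) G.

Definition windable (I : finType) (G : bvec I -> rat) : Prop :=
  windable_wrt (@is_match' I) G.

(* 1+J is modelled as option J, with None the extra element;
   z = (p;x) with p = z None and x_j = z (Some j). *)
Definition F_oplus (J : finType) (F : bvec J -> rat) (z : bvec (option J)) : rat :=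
  let p := z None in
  let x : bvec J := [ffun j => z (Some j)] in
  if ~~ odd (p + \sum_(j : J) x j)%N then F x else 0.

(* Main.v *)
Require Import Defs.
From HB Require Import structures.
From mathcomp Require Import all_boot all_order all_algebra.
Import Order.TTheory GRing.Theory Num.Theory.
Set Implicit Arguments. Unset Strict Implicit. Unset Printing Implicit Defensive.

Section Gen.
Variable I : finType.

Lemma partitionP' (P : {set {set I}}) (D : {set I}) :
  partition P D <->
  [/\ set0 \notin P,
      (forall i, i \in D <-> exists2 S, S \in P & i \in S) &
      (forall S T i, S \in P -> T \in P -> i \in S -> i \in T -> S = T)].
Proof.
rewrite /partition /cover; split.
  case/and3P => /eqP cov /trivIsetP tI P0; split => //.
    move=> i; rewrite -cov; split; first by case/bigcupP => S; exists S.
    by case=> S SP iS; apply/bigcupP; exists S.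
  move=> S T i SP TP iS iT; apply/eqP; apply/negPn/negP => nST.
  by have := disjointFr (tI _ _ SP TP nST) iS; rewrite iT.
case=> P0 cov tI; apply/and3P; split => //.
  apply/eqP/setP => i; apply/bigcupP/idP.
    by case=> S SP iS; apply/(cov i); exists S.
  by move/(cov i) => [S SP iS]; exists S.
apply/trivIsetP => S T SP TP nST; apply/pred0P => i /=.
apply/negP => /andP [iS iT]; by rewrite (tI _ _ _ SP TP iS iT) eqxx in nST.
Qed.

Lemma sum_bool (b : bvec I) : (\sum_i (b i : nat) = #|supp b|)%N.
Proof.
rewrite -sum1_card (big_mkcond (fun i => i \in supp b)) /=.
by apply: eq_bigr => i _; rewrite inE; case: (b i).
Qed.

Lemma sum_charv (S : {set I}) : (\sum_i (charv S i : nat) = #|S|)%N.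
Proof.
rewrite sum_bool; apply: eq_card => i; by rewrite !inE ffunE.
Qed.

Lemma odd_sum_xor (x y : bvec I) :
  odd (\sum_i (bxor x y i : nat)) = odd (\sum_i (x i : nat)) (+) odd (\sum_i (y i : nat)).
Proof.
have E : (\sum_i (bxor x y i : nat) + (\sum_i (x i && y i : nat)).*2
           = \sum_i (x i : nat) + \sum_i (y i : nat))%N.
  rewrite -muln2 big_distrl /= -!big_split /=; apply: eq_bigr => i _.
  by rewrite ffunE; case: (x i); case: (y i).
by rewrite -oddD -E oddD odd_double addbF.
Qed.

Lemma bxorA (x y z : bvec I) : bxor (bxor x y) z = bxor x (bxor y z).
Proof. by apply/ffunP => i; rewrite !ffunE addbA. Qed.
Lemma bxorC (x y : bvec I) : bxor x y = bxor y x.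
Proof. by apply/ffunP => i; rewrite !ffunE addbC. Qed.
Lemma bxorK (x y : bvec I) : bxor (bxor x y) y = x.
Proof. by apply/ffunP => i; rewrite !ffunE addbK. Qed.
Lemma bxor_cancel (x y s : bvec I) : bxor (bxor x s) (bxor y s) = bxor x y.
Proof. by apply/ffunP => i; rewrite !ffunE; case: (x i); case: (y i); case: (s i). Qed.

End Gen.

Section Opt.
Variable J : finType.

Lemma sum_opt (f : option J -> nat) : (\sum_o f o = f None + \sum_j f (Some j))%N.
Proof.
rewrite (bigD1 None) //=; congr (_ + _)%N.
rewrite (reindex_omap Some id) //=; last by case.
by apply: eq_bigl => j; rewrite eqxx.
Qed.

Lemma card_opt (S : {set option J}) : #|S| = ((None \in S) + #|Some @^-1: S|)%N.
Proof.
rewrite -!sum1_card (big_mkcond (fun o => o \in S)) sum_opt /=.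
rewrite (big_mkcond (fun j => j \in Some @^-1: S)) /=.
have -> : (\sum_i (if i \in Some @^-1: S then 1 else 0) = \sum_j (if Some j \in S then 1 else 0))%N.
  by apply: eq_bigr => j _; rewrite inE.
by case: (None \in S).
Qed.

End Opt.
Section Pairs.
Variable T : finType.

Fixpoint pairs (s : seq T) : seq {set T} :=
  match s with a :: b :: r => [set a; b] :: pairs r | _ => [::] end.

Lemma pairs_blocks (s : seq T) B : uniq s -> B \in pairs s ->
  exists a b, [/\ a != b, a \in s, b \in s & B = [set a; b]].
Proof.
have [n] := ubnP (size s); elim: n s => // n IH [|a [|b r]] //= Hn.
case/andP => /norP [nab nar] /andP [nbr ur].
rewrite inE => /orP [/eqP -> | Br]; first by exists a, b; rewrite !inE !eqxx orbT.
have [|a' [b' [H1 H2 H3 H4]]] := IH r _ ur Br; first by rewrite ltnS in Hn; apply: ltnW.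
by exists a', b'; rewrite !inE H2 H3 !orbT.
Qed.

Lemma pairs_cover (s : seq T) o : uniq s -> ~~ odd (size s) -> o \in s ->
  exists2 B, B \in pairs s & o \in B.
Proof.
have [n] := ubnP (size s); elim: n s => // n IH [|a [|b r]] //= Hn.
case/andP => /norP [nab nar] /andP [nbr ur] ev.
rewrite !inE => /or3P [/eqP -> | /eqP -> | or].
- by exists [set a; b]; rewrite ?inE ?eqxx.
- by exists [set a; b]; rewrite ?inE ?eqxx ?orbT.
have [||B HB oB] := IH r _ ur _ or; first by rewrite ltnS in Hn; apply: ltnW.
  by move: ev; rewrite /= negbK.
by exists B; rewrite // inE HB orbT.
Qed.

Lemma pairs_disj (s : seq T) B1 B2 o : uniq s -> B1 \in pairs s -> B2 \in pairs s ->
  o \in B1 -> o \in B2 -> B1 = B2.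
Proof.
have [n] := ubnP (size s); elim: n s => // n IH [|a [|b r]] //= Hn.
case/andP => /norP [nab nar] /andP [nbr ur].
have Hr : forall B, B \in pairs r -> o \in B -> o \in r.
  move=> B HB oB; have [a' [b' [_ H2 H3 E]]] := pairs_blocks ur HB.
  by move: oB; rewrite E !inE => /orP [] /eqP ->.
have Hab : o \in [set a; b] -> o \notin r.
  by rewrite !inE => /orP [] /eqP ->.
rewrite !inE => /orP [/eqP -> | B1r] /orP [/eqP -> | B2r] o1 o2 //.
- by have := Hab o1; rewrite (Hr _ B2r o2).
- by have := Hab o2; rewrite (Hr _ B1r o1).
apply: (IH r) => //; by rewrite ltnS in Hn; apply: ltnW.
Qed.

Lemma pairs_card (s : seq T) B : uniq s -> B \in pairs s -> #|B| = 2%N.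
Proof.
move=> us HB; have [a [b [nab _ _ ->]]] := pairs_blocks us HB.
by rewrite cards2 nab.
Qed.

End Pairs.
Section Main.
Variable J : finType.
Local Notation OJ := (option J).

Definition xp (z : bvec OJ) : bvec J := [ffun j => z (Some j)].
Definition ext (x : bvec J) : bvec OJ :=
  [ffun o => if o is Some j then x j else odd (\sum_j (x j : nat))].
Definition unl (S : {set OJ}) : {set J} := Some @^-1: S.
Definition unlM (M : {set {set OJ}}) : {set {set J}} := [set unl S | S in M].

Lemma F_oplusE (F : bvec J -> rat) z :
  F_oplus F z = if ~~ odd (\sum_o (z o : nat)) then F (xp z) else 0%R.
Proof. by rewrite /F_oplus sum_opt; congr (if ~~ odd (_ + _) then _ else _); apply: eq_bigr => j _; rewrite ffunE. Qed.

Lemma xp_ext x : xp (ext x) = x.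
Proof. by apply/ffunP => j; rewrite !ffunE. Qed.

Lemma par_ext x : odd (\sum_o (ext x o : nat)) = false.
Proof.
rewrite sum_opt ffunE oddD.
have -> : (\sum_j (ext x (Some j) : nat) = \sum_j (x j : nat))%N.
  by apply: eq_bigr => j _; rewrite ffunE.
by rewrite oddb addbb.
Qed.

Lemma F_oplus_ext (F : bvec J -> rat) x : F_oplus F (ext x) = F x.
Proof. by rewrite F_oplusE par_ext xp_ext. Qed.

Lemma xp_bxor z w : xp (bxor z w) = bxor (xp z) (xp w).
Proof. by apply/ffunP => j; rewrite !ffunE. Qed.

Lemma card_unl (S : {set OJ}) : #|S| = 2%N -> (#|unl S| = 2 - (None \in S))%N.
Proof. rewrite card_opt /unl; case: (None \in S); rewrite /= ?add1n ?add0n; by [case=> -> | move=> ->]. Qed.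

Lemma unl_match (zw : bvec OJ) M : is_match zw M -> is_match' (xp zw) (unlM M).
Proof.
case/andP => /partitionP' [P0 cov tI] /forall_inP c2.
apply/andP; split; last first.
  apply/forall_inP => S0 /imsetP [S SM ->]; rewrite (card_unl (eqP (c2 _ SM))).
  by case: (None \in S).
apply/partitionP'; split.
- apply/negP => /imsetP [S SM E].
  by have := card_unl (eqP (c2 _ SM)); rewrite -E cards0; case: (None \in S).
- move=> i; rewrite !inE ffunE; split.
    move=> zi; have : Some i \in supp zw by rewrite inE.
    case/(cov _) => S SM iS; by exists (unl S); [exact: imset_f | rewrite inE].
  case=> S0 /imsetP [S SM ->]; rewrite inE => iS.
  have : Some i \in supp zw by apply/(cov _); exists S.
  by rewrite inE.
- move=> S0 T0 i /imsetP [S SM ->] /imsetP [T TM ->]; rewrite !inE => iS iT.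
  by rewrite (tI _ _ _ SM TM iS iT).
Qed.

End Main.
Section Rev.
Variable J : finType.
Local Notation OJ := (option J).

Lemma ext_flip (x : bvec J) (S' : {set OJ}) : #|S'| = 2%N ->
  ext (bxor x (charv (unl S'))) = bxor (ext x) (charv S').
Proof.
move=> c2; apply/ffunP => [[j|]]; rewrite !ffunE //=.
  by rewrite /unl inE.
rewrite odd_sum_xor sum_charv (card_unl c2); congr (_ (+) _).
by case: (None \in S').
Qed.

Lemma ext_cancel (x y : bvec J) (S : {set J}) :
  bxor (ext (bxor x (charv S))) (ext (bxor y (charv S))) = bxor (ext x) (ext y).
Proof.
apply/ffunP => [[j|]]; rewrite !ffunE /=.
  by rewrite ?ffunE; case: (x j); case: (y j); case: (j \in S).
rewrite !odd_sum_xor; case: (odd (\sum_i (x i : nat))); case: (odd (\sum_i (y i : nat)));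
  by case: (odd _).
Qed.

Local Open Scope ring_scope.
Lemma rev_dir (F : bvec J -> rat) : even_windable (F_oplus F) -> windable F.
Proof.
case=> B' [Bp [Bs Bi]].
exists (fun x y M => \sum_(M' | is_match (bxor (ext x) (ext y)) M' && (unlM M' == M))
                         B' (ext x) (ext y) M').
split; [|split].
- move=> x y M _; apply: sumr_ge0 => M' /andP [H _]; exact: Bp.
- move=> x y; rewrite -(F_oplus_ext F x) -(F_oplus_ext F y) Bs.
  rewrite (partition_big (@unlM J) (is_match' (bxor x y))) //.
  by move=> M' /unl_match; rewrite xp_bxor !xp_ext.
- move=> x y M S HM SM; rewrite ext_cancel.
  apply: eq_bigr => M' /andP [HM' /eqP EM].
  have : S \in unlM M' by rewrite EM.
  case/imsetP => S' S'M ES.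
  have c2 : #|S'| = 2%N by move: HM' => /andP [_ /forall_inP c2]; apply/eqP/c2.
  by rewrite ES !ext_flip //; apply: Bi.
Qed.

End Rev.
Section Fwd.
Variable J : finType.
Local Notation OJ := (option J).

Definition par (z : bvec OJ) := odd (\sum_o (z o : nat)).
Definition sing (M : {set {set J}}) : {set J} := [set c | [set c] \in M].
Definition sq (zw : bvec OJ) M : seq OJ :=
  (if zw None then [:: None] else [::]) ++ map Some (enum (sing M)).
Definition liftS (T : {set J}) : {set OJ} := Some @: T.
Definition canon (zw : bvec OJ) (M : {set {set J}}) : {set {set OJ}} :=
  liftS @: [set T in M | #|T| == 2%N] :|: [set S | S \in pairs (sq zw M)].

Lemma uniq_sq zw M : uniq (sq zw M).
Proof.
rewrite /sq; case: (zw None) => /=; rewrite ?(map_inj_uniq Some_inj) ?enum_uniq ?andbT //.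
by apply/mapP => [[c _]].
Qed.

Lemma mem_sq zw M o : (o \in sq zw M) = if o is Some c then c \in sing M else zw None.
Proof.
rewrite /sq mem_cat; case: o => [c|].
  by rewrite (mem_map Some_inj) mem_enum; case: (zw None).
by case: (zw None) => /=; rewrite ?inE ?eqxx //; apply/mapP => [[c _]].
Qed.

Lemma size_sq zw M : size (sq zw M) = ((zw None : nat) + #|sing M|)%N.
Proof. by rewrite /sq size_cat size_map -cardE; case: (zw None). Qed.

Lemma par_None z : ~~ par z -> z None = odd (\sum_j (xp z j : nat)).
Proof.
rewrite /par sum_opt oddD oddb.
have -> : (\sum_j (z (Some j) : nat) = \sum_j (xp z j : nat))%N.
  by apply: eq_bigr => j _; rewrite ffunE.
by case: (z None); case: (odd _).
Qed.

Lemma sum_pred (M : {set {set J}}) (P : pred {set J}) :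
  (\sum_(T in M) (P T : nat) = #|[set T in M | P T]|)%N.
Proof.
rewrite -sum1_card (big_mkcond (fun T => T \in [set T in M | P T])) [LHS]big_mkcond /=.
by apply: eq_bigr => T _; rewrite inE; case: (T \in M); case: (P T).
Qed.

Lemma card_sing (M : {set {set J}}) : #|[set T in M | #|T| == 1%N]| = #|sing M|.
Proof.
rewrite -(card_imset (sing M) (@set1_inj J)); apply: eq_card => T.
rewrite inE; apply/andP/imsetP.
  case=> TM /cards1P [c Tc]; exists c => //; by rewrite inE -Tc.
by case=> c; rewrite inE => cM ->; rewrite cards1.
Qed.

Lemma sq_even z w M : ~~ par z -> ~~ par w -> is_match' (bxor (xp z) (xp w)) M ->
  ~~ odd (size (sq (bxor z w) M)).
Proof.
move=> pz pw /andP [PM /forall_inP c12].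
rewrite size_sq oddD oddb ffunE (par_None pz) (par_None pw) -odd_sum_xor sum_bool.
rewrite (card_partition PM).
have -> : (\sum_(T in M) #|T| = \sum_(T in M) ((#|T| == 1%N) : nat) + (\sum_(T in M) ((#|T| == 2%N) : nat)).*2)%N.
  rewrite -muln2 big_distrl /= -big_split /=; apply: eq_bigr => T TM.
  by case/orP: (c12 _ TM) => /eqP ->.
by rewrite oddD odd_double addbF sum_pred card_sing addbb.
Qed.

Lemma unl_img (T : {set J}) : unl (Some @: T) = T.
Proof. by apply/setP => j; rewrite inE (mem_imset _ _ Some_inj). Qed.

Lemma canon_match z w M : ~~ par z -> ~~ par w -> is_match' (bxor (xp z) (xp w)) M ->
  is_match (bxor z w) (canon (bxor z w) M).
Proof.
move=> pz pw HM; have ev := sq_even pz pw HM.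
set zw := bxor z w; have us := uniq_sq zw M.
move: HM => /andP [/partitionP' [P0 cov tI] /forall_inP c12].
have hsq : forall S o, S \in pairs (sq zw M) -> o \in S -> o \in sq zw M.
  move=> S o Sp oS; have [a [b [_ Ha Hb ES]]] := pairs_blocks us Sp.
  by move: oS; rewrite ES !inE => /orP [] /eqP ->.
have cardC : forall S, S \in canon zw M -> #|S| = 2%N.
  move=> S; rewrite inE => /orP [/imsetP [T] | Sp].
    rewrite inE => /andP [TM cT] ->; rewrite (card_imset _ Some_inj); exact/eqP.
  by rewrite inE in Sp; exact: pairs_card us Sp.
have inC1 : forall T, T \in M -> #|T| == 2%N -> Some @: T \in canon zw M.
  by move=> T TM cT; rewrite inE; apply/orP; left; apply: imset_f; rewrite inE TM.
have inC2 : forall S, S \in pairs (sq zw M) -> S \in canon zw M.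
  by move=> S Sp; rewrite inE; apply/orP; right; rewrite inE.
apply/andP; split; last by apply/forall_inP => S /cardC ->.
apply/partitionP'; split.
- by apply/negP => /cardC; rewrite cards0.
- move=> o; split.
  + rewrite inE; case: o => [j|] zo.
    * have : j \in supp (bxor (xp z) (xp w)) by rewrite inE -xp_bxor ffunE.
      case/(cov _) => T TM jT; case/orP: (c12 _ TM) => cT.
      - case/cards1P: cT => c Tc; move: jT; rewrite Tc inE => /eqP Ejc.
        have : Some j \in sq zw M by rewrite mem_sq inE Ejc -Tc.
        case/(pairs_cover us ev) => S Sp jS; exists S => //; exact: inC2.
      - by exists (Some @: T); [exact: inC1 | apply: imset_f].
    * have : None \in sq zw M by rewrite mem_sq.
      case/(pairs_cover us ev) => S Sp jS; exists S => //; exact: inC2.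
  + case=> S; rewrite inE => /orP [/imsetP [T TinP ->] | Sp] oS.
    * case/imsetP: oS => j jT ->; move: TinP; rewrite inE => /andP [TM _].
      have : j \in supp (bxor (xp z) (xp w)) by apply/(cov _); exists T.
      by rewrite !inE -xp_bxor ffunE.
    * rewrite inE in Sp; have := hsq _ _ Sp oS; rewrite mem_sq inE.
      case: o oS => [c|] // oS; rewrite inE => cM.
      have : c \in supp (bxor (xp z) (xp w)) by apply/(cov _); exists [set c]; rewrite ?inE.
      by rewrite !inE -xp_bxor ffunE.
- have mix : forall T S o, T \in M -> #|T| == 2%N -> S \in pairs (sq zw M) ->
      o \in Some @: T -> o \in S -> False.
    move=> T S o TM cT Sp oT oS; case/imsetP: oT => j jT Eo.
    have := hsq _ _ Sp oS; rewrite Eo mem_sq inE => jM.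
    have ET := tI _ _ j TM jM jT (set11 j).
    by move: cT; rewrite ET cards1.
  move=> S T o; rewrite !inE => /orP [/imsetP [T1 T1P ->] | Sp] /orP [/imsetP [T2 T2P ->] | Tp] oS oT.
  + move: T1P T2P; rewrite !inE => /andP [T1M _] /andP [T2M _].
    case/imsetP: oS => j jT1 Eo; move: oT; rewrite Eo (mem_imset _ _ Some_inj) => jT2.
    by rewrite (tI _ _ _ T1M T2M jT1 jT2).
  + move: T1P; rewrite !inE => /andP [T1M cT1]; case: (mix _ _ _ T1M cT1 Tp oS oT).
  + move: T2P; rewrite !inE => /andP [T2M cT2]; case: (mix _ _ _ T2M cT2 Sp oT oS).
  + exact: pairs_disj us Sp Tp oS oT.
Qed.

End Fwd.
Section Fwd2.
Variable J : finType.
Local Notation OJ := (option J).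

Lemma canon_blocks zw (M : {set {set J}}) S : S \in canon zw M ->
  unl S \in M \/ exists c d, [/\ c != d, [set c] \in M, [set d] \in M & unl S = [set c; d]].
Proof.
rewrite inE => /orP [/imsetP [T] | Sp].
  by rewrite inE => /andP [TM _] ->; left; rewrite /liftS unl_img.
rewrite inE in Sp; have [a [b [nab Ha Hb ES]]] := pairs_blocks (uniq_sq zw M) Sp.
rewrite {}ES; move: Ha Hb nab; rewrite !mem_sq.
case: a => [c|]; case: b => [d|] //.
- rewrite !inE => cM dM ncd; right; exists c, d; split => //.
  by apply/setP => j; rewrite !inE.
- rewrite inE => cM _ _; left; suff -> : unl [set Some c; None] = [set c] by [].
  by apply/setP => j; rewrite !inE orbF.
- rewrite inE => _ dM _; left; suff -> : unl [set None; Some d] = [set d] by [].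
  by apply/setP => j; rewrite !inE.
Qed.

Lemma charv_pair (x : bvec J) c d : c != d ->
  bxor x (charv [set c; d]) = bxor (bxor x (charv [set c])) (charv [set d]).
Proof.
move=> ncd; apply/ffunP => j; rewrite !ffunE !inE.
case: (eqVneq j c) => [->|_]; last by rewrite addbF.
by rewrite (negbTE ncd) !addbF.
Qed.

Lemma xp_flip (z : bvec OJ) S : xp (bxor z (charv S)) = bxor (xp z) (charv (unl S)).
Proof. by apply/ffunP => j; rewrite !ffunE inE. Qed.

Lemma par_flip (z : bvec OJ) S : par (bxor z (charv S)) = par z (+) odd #|S|.
Proof. by rewrite /par odd_sum_xor sum_charv. Qed.

Local Open Scope ring_scope.

Lemma fwd_dir (F : bvec J -> rat) : windable F -> even_windable (F_oplus F).
Proof.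
case=> B [Bp [Bs Bi]].
exists (fun z w M' => if ~~ par z && ~~ par w then
   \sum_(M | is_match' (bxor (xp z) (xp w)) M && (canon (bxor z w) M == M')) B (xp z) (xp w) M
   else 0).
split; [|split].
- move=> z w M' _ /=; case: ifP => // _.
  by apply: sumr_ge0 => M /andP [H _]; exact: Bp.
- move=> z w; rewrite !F_oplusE -/(par z) -/(par w).
  case Hz: (par z); case Hw: (par w) => /=;
    rewrite ?mul0r ?mulr0; try by rewrite big1.
  rewrite Bs (partition_big (canon (bxor z w)) (is_match (bxor z w))) //.
  by move=> M HM; apply: canon_match => //; rewrite ?Hz ?Hw.
- move=> z w M' S HM' SM'.
  have c2 : #|S| = 2%N by move: HM' => /andP [_ /forall_inP c2]; apply/eqP/c2.
  rewrite /= !par_flip c2 /= !addbF bxor_cancel.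
  case: ifP => // _; rewrite !xp_flip !bxor_cancel.
  apply: eq_bigr => M /andP [HM /eqP EC].
  have : S \in canon (bxor z w) M by rewrite EC.
  case/canon_blocks => [SM | [c [d [ncd cM dM ->]]]]; first exact: Bi.
  rewrite !charv_pair // (Bi _ _ _ [set c] HM cM) (Bi _ _ _ [set d] _ dM) //.
  by rewrite bxor_cancel.
Qed.

End Fwd2.

Local Open Scope ring_scope.

Theorem lemma8 (J : finType) (F : bvec J -> rat) (F_nonneg : forall x, 0 <= F x) :
  windable F <-> even_windable (F_oplus F).
Proof. split; [exact: fwd_dir | exact: rev_dir]. Qed.
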